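(* Let $L$ be a finite lattice, $a\in L$, and $\varphi\in M_1(L)$. Then $\Lambda_a\varphi\in M_1(L)$, where $\Lambda_a\varphi(x)=\varphi(x)-\lambda(\varphi;a,x)$ for $x\in L$.
   Context: $L$ is a finite lattice with join $\vee$. $M_1(L)$ is the set of nonnegative monotone real functions on $L$. A path from $a$ to $b$ in $L$ is a sequence $H=(h_0,\dots,h_m)$ of distinct elements of $L$ with $h_0=a$, $h_m=b$ ($m\ge0$), viewed as a tree with edges $\{h_{i-1},h_i\}$; for it $\varphi(H)=\sum_{i=0}^m\varphi(h_i)-\sum_{i=1}^m\varphi(h_{i-1}\vee h_i)$. $\lambda(\varphi;a,b)=\max\{\varphi(H): H\text{ a path from }a\text{ to }b\}$. *)

(* Defs.v *)
From mathcomp Require Import all_boot all_order all_algebra.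
From mathcomp Require Import reals.
Set Implicit Arguments. Unset Strict Implicit. Unset Printing Implicit Defensive.
Import Order.TTheory GRing.Theory Num.Theory.
Local Open Scope ring_scope.

Section Defs.
Context {d : Order.disp_t} {L : finLatticeType d} {R : realType}.

Definition M1 (phi : L -> R) : Prop :=
  (forall x, 0 <= phi x) /\ (forall x y : L, (x <= y)%O -> phi x <= phi y).

(* A path h_0, ..., h_m is represented by its head h_0 and tail [h_1;...;h_m]. *)
Definition is_path_from_to (a b : L) (s : seq L) : bool :=
  uniq (a :: s) && (last a s == b).

Definition path_value (phi : L -> R) (a : L) (s : seq L) : R :=
  \sum_(h <- a :: s) phi h - \sum_(p <- zip (a :: s) s) phi (Order.join p.1 p.2).

Fixpoint allseqs (n : nat) : seq (seq L) :=
  if n is n'.+1 then [::] :: [seq x :: s | x <- enum L, s <- allseqs n']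
  else [:: [::]].

(* A canonical path from a to b: (a) if a = b, else (a, b). Used only as the
   initial value of the max; it is itself a path from a to b. *)
Definition canon_path (a b : L) : seq L := if a == b then [::] else [:: b].

(* lambda(phi; a, b) = max { phi(H) : H a path from a to b }.
   Tails of paths are duplicate-free, hence have length < #|L|. *)
Definition lambda (phi : L -> R) (a b : L) : R :=
  \big[Num.max/path_value phi a (canon_path a b)]_(s <- allseqs #|L| | is_path_from_to a b s)
     path_value phi a s.

Definition Lambda (a : L) (phi : L -> R) : L -> R := fun x => phi x - lambda phi a x.

End Defs.

(* Main.v *)
Require Import Defs.
From mathcomp Require Import all_boot all_order all_algebra.
From mathcomp Require Import reals.
From mathcomp Require Import lra zify.
Set Implicit Arguments. Unset Strict Implicit. Unset Printing Implicit Defensive.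
Import Order.TTheory GRing.Theory Num.Theory.
Local Open Scope ring_scope.

Section Aux.
Context {d : Order.disp_t} {L : finLatticeType d} {R : realType}.
Variable phi : L -> R.

Fixpoint pv (a : L) (s : seq L) : R :=
  if s is b :: t then phi a - phi (Order.join a b) + pv b t else phi a.

Lemma path_valueE a s : path_value phi a s = pv a s.
Proof.
elim: s a => [|b s IH] a.
  by rewrite /path_value /= !big_cons !big_nil; lra.
rewrite /path_value /= !big_cons /= -IH /path_value /=.
rewrite !big_cons /=; lra.
Qed.

Hypothesis mono : forall x y : L, (x <= y)%O -> phi x <= phi y.

Lemma pv_le a s : pv a s <= phi (last a s).
Proof.
elim: s a => [|b s IH] a /=; first by [].
have := mono (leUl a b); have := IH b; lra.
Qed.

Lemma pv_cat a s1 s2 : pv a (s1 ++ s2) = pv a s1 + pv (last a s1) s2 - phi (last a s1).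
Proof.
elim: s1 a => [|b s IH] a /=; first lra.
rewrite IH; lra.
Qed.

Lemma mem_allseqs n (s : seq L) : (size s <= n)%N -> s \in allseqs n.
Proof.
elim: n s => [|n IH] [|x s] //= hs.
rewrite inE; apply/orP; right.
apply: (allpairs_f (fun x s => x :: s)); first by rewrite mem_enum.
exact: IH.
Qed.

Lemma le_bigmax_seq (I : eqType) (r : seq I) (P : pred I) (F : I -> R) x0 i :
  i \in r -> P i -> F i <= \big[Num.max/x0]_(j <- r | P j) F j.
Proof.
elim: r => [|j r IH] //; rewrite inE big_cons => /orP [/eqP <-|hi] Pi.
  by rewrite Pi le_max lexx.
case: (P j); last exact: IH.
by rewrite le_max IH // orbT.
Qed.

Lemma lambda_ge a x s : is_path_from_to a x s -> path_value phi a s <= lambda phi a x.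
Proof.
move=> hp; apply: le_bigmax_seq => //; apply: mem_allseqs.
case/andP: hp => hu _.
have := max_card (mem (a :: s)); rewrite (card_uniqP hu) /=; lia.
Qed.

Lemma lambda_le a x (B : R) :
  (forall s, is_path_from_to a x s -> path_value phi a s <= B) -> lambda phi a x <= B.
Proof.
move=> H; rewrite /lambda; apply: (big_ind (fun v => v <= B)).
- apply: H; rewrite /canon_path /is_path_from_to.
  case: eqP => [->|ne] /=; first by rewrite eqxx.
  by rewrite inE andbT eqxx andbT; apply/eqP => e; apply: ne.
- by move=> u v hu hv; rewrite ge_max hu hv.
- by move=> s; apply: H.
Qed.

End Aux.

Theorem lemma3p11 (d : Order.disp_t) (L : finLatticeType d) (R : realType)
    (a : L) (phi : L -> R) :
  M1 phi -> M1 (Lambda a phi).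
Proof.
case=> pos mono; split.
  move=> x; rewrite /Lambda subr_ge0; apply: lambda_le => s /andP [_ /eqP hl].
  by rewrite path_valueE -hl; apply: pv_le.
move=> x y xy; rewrite /Lambda.
suff: lambda phi a y <= lambda phi a x + phi y - phi x by lra.
apply: lambda_le => s /andP [hu /eqP hl].
rewrite path_valueE.
have [xin|xnin] := boolP (x \in a :: s).
  move: xin; rewrite inE => /orP [/eqP xa|xs].
    have h1 : pv phi a s <= phi y by rewrite -hl; apply: pv_le.
    have h2 : path_value phi a [::] <= lambda phi a x.
      apply: lambda_ge; by rewrite /is_path_from_to /= xa eqxx.
    move: h2; rewrite path_valueE /=; subst x; lra.
  case/splitPr: xs hu hl => p1 p2 hu hl.
  have e : p1 ++ x :: p2 = rcons p1 x ++ p2 by rewrite cat_rcons.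
  rewrite e pv_cat last_rcons.
  rewrite e last_cat last_rcons in hl.
  have h1 : pv phi x p2 <= phi y by rewrite -hl; apply: pv_le.
  have h2 : path_value phi a (rcons p1 x) <= lambda phi a x.
    apply: lambda_ge; rewrite /is_path_from_to last_rcons eqxx andbT.
    move: hu; rewrite e -cat_cons ; rewrite cat_uniq => /andP [].
    by move=> h _; rewrite -rcons_cons; exact: h.
  move: h2 h1; rewrite path_valueE.
  move: (pv phi a (rcons p1 x)) (pv phi x p2) (lambda phi a x) => u v w; lra.
have h2 : path_value phi a (rcons s x) <= lambda phi a x.
  apply: lambda_ge; rewrite /is_path_from_to last_rcons eqxx andbT.
  by rewrite -rcons_cons rcons_uniq xnin hu.
move: h2; rewrite path_valueE -cats1 pv_cat /= hl (join_idPl xy).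
move: (pv phi a s) (lambda phi a x) => u w; lra.
Qed.
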